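(* Let $R$ be a ring with identity and $a,b,c,\alpha\in R$ such that $a$ has a $(b,c)$-inverse $a^\otimes$. The following are equivalent: (i) $\alpha$ is left $(b,c)$-invertible; (ii) $\alpha$ is right annihilator $(b,c)$-invertible; (iii) $1+(\alpha-a)a^\otimes$ is left invertible; (iv) $1+a^\otimes(\alpha-a)$ is left invertible.
   Context: For $x\in R$: $xR=\{xr:r\in R\}$, $Rx=\{rx:r\in R\}$, $x^\circ=\{r: xr=0\}$. $a$ is $(b,c)$-invertible if there is $y\in R$ with $y\in (bRy)\cap(yRc)$, $yab=b$, $cay=c$; such $y$ is unique, denoted $a^\otimes$. $\alpha$ is left $(b,c)$-invertible if there is $y$ with $Ry\subseteq Rc$ and $y\alpha b=b$; right annihilator $(b,c)$-invertible if there is $y$ with $c^\circ\subseteq y^\circ$ and $y\alpha b=b$. *)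

(* Defs.v *)
From mathcomp Require Import all_boot all_algebra.
Set Implicit Arguments. Unset Strict Implicit. Unset Printing Implicit Defensive.
Import GRing.Theory.
Local Open Scope ring_scope.

Definition bc_inverse (R : pzRingType) (a b c y : R) : Prop :=
  [/\ (exists r : R, y = b * r * y),
      (exists r : R, y = y * r * c),
      y * a * b = b & c * a * y = c].

Definition bc_invertible (R : pzRingType) (a b c : R) : Prop :=
  exists y : R, bc_inverse a b c y.

Definition left_ideal_sub (R : pzRingType) (y c : R) : Prop :=
  forall r : R, exists s : R, r * y = s * c.

Definition rann_sub (R : pzRingType) (c y : R) : Prop :=
  forall r : R, c * r = 0 -> y * r = 0.

Definition left_bc_invertible (R : pzRingType) (al b c : R) : Prop :=
  exists y : R, left_ideal_sub y c /\ y * al * b = b.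

Definition rann_bc_invertible (R : pzRingType) (al b c : R) : Prop :=
  exists y : R, rann_sub c y /\ y * al * b = b.

Definition left_invertible (R : pzRingType) (x : R) : Prop :=
  exists z : R, z * x = 1.

(* Main.v *)
Require Import Defs.
From mathcomp Require Import all_boot all_algebra.
Import GRing.Theory.
Local Open Scope ring_scope.

Theorem theorem4p2 (R : pzRingType) (a b c al ainv : R) :
  bc_inverse a b c ainv ->
  [<-> left_bc_invertible al b c;
       rann_bc_invertible al b c;
       left_invertible (1 + (al - a) * ainv);
       left_invertible (1 + ainv * (al - a))].
Proof.
case=> [[r Hr] [s Hs] Hb Hc].
tfae.
- case=> z [Hz Hzb]; exists z; split=> // t Ht.
  have [u Hu] := Hz 1; rewrite mul1r in Hu.
  by rewrite Hu -mulrA Ht mulr0.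
- case=> z [Hz Hzb]; exists (1 - (al - a) * z).
  have Hz0 : z * (1 - a * ainv) = 0.
    by apply: Hz; rewrite mulrBr mulr1 mulrA Hc subrr.
  have F1 : z * a * ainv = z.
    by move: Hz0; rewrite mulrBr mulr1 mulrA => /eqP; rewrite subr_eq0 => /eqP.
  have F2 : z * al * ainv = ainv.
    by rewrite {1}Hr !mulrA Hzb -Hr.
  have Hzu : z * (1 + (al - a) * ainv) = ainv.
    by rewrite mulrDr mulr1 mulrA mulrBr mulrBl F1 F2 addrC subrK.
  by rewrite [(1 - _) * _]mulrBl mul1r -mulrA Hzu addrK.
- case=> w Hw; set x := al - a in Hw *; clearbody x; exists (1 - ainv * w * x).
  rewrite [(1 - _) * _]mulrBl mul1r.
  have -> : ainv * w * x * (1 + ainv * x)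
          = ainv * (w * (1 + x * ainv)) * x.
    by rewrite !mulrDr !mulr1 !mulrDl !mulrA.
  by rewrite Hw mulr1 addrK.
- case=> w Hw; exists (w * ainv); split.
    by move=> t; exists (t * w * ainv * s); rewrite {1}Hs !mulrA.
  have H : (1 + ainv * (al - a)) * b = ainv * al * b.
    by rewrite mulrDl mul1r mulrBr mulrBl Hb addrC subrK.
  by rewrite -[RHS]mul1r -Hw -[RHS]mulrA H !mulrA.
Qed.
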